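(* In the setting described in the context, suppose $(\eta^{l,n+1})_{l=1}^M$, $\psi^{n+1}$, $\xi^{n+1}$ (real grid functions) satisfy Scheme II given $(\eta^{l,n})_l$, $\psi^n$, $\xi^n$. Set $c^{l,m}=e^{\eta^{l,m}}$, $T^m=e^{\xi^m}$ for $m=n,n+1$. Then: (1) (mass conservation) $(e^{\eta^{l,n+1}},1)=(e^{\eta^{l,n}},1)$ for $l=1,\dots,M$; (2) (positivity) $c^{l,n+1}_i>0$ and $T^{n+1}_i>0$ for all $i,l$; (3) (discrete entropy increasing) with $S^m_h=-\sum_{l=1}^M(c^{l,m},\log c^{l,m})+(\log T^m+1,C_T)$, \[ \frac{S^{n+1}_h-S^n_h}{\Delta t}\ \ge\ \varepsilon\sum_{l=1}^M\big(\nu^le^{\eta^{l,n+1/2}}|\check{\mathbf u}^{l,n+1/2}|^2,R^{n+1/2}\big)+k\sum_{\sigma\in\mathcal E_{int}}\tau_\sigma\,\mathcal A_\sigma\big(e^{\xi^{n+1/2}}\big)\,D(\log R^{n+1/2})_{i,\sigma}\,DR^{n+1/2}_{i,\sigma}\ \ge 0 . \]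
   Context: Mesh. $\Omega\subset\mathbb R^d$ is a bounded polygonal/polyhedral domain with $\partial\Omega=\Gamma_D\cup\Gamma_N$, $\Gamma_D\cap\Gamma_N=\emptyset$. A Voronoi finite-volume mesh consists of points $\mathbf x_1,\dots,\mathbf x_N$ and control volumes $V_i=\{\mathbf y\in\Omega:|\mathbf y-\mathbf x_i|<|\mathbf y-\mathbf x_j|\ \forall j\ne i\}$. An interior face is $\sigma=\partial V_i\cap\partial V_j$ of positive $(d-1)$-measure, written $\sigma=i|j$; $\mathcal E_{int}$ is the set of interior faces and $\mathcal E_{i,int}$ those of $V_i$; $\mathcal E^D_{i,ext}$, $\mathcal E^N_{i,ext}$ are the faces of $\partial V_i$ lying in $\Gamma_D$, resp. $\Gamma_N$. $\mathrm m(\cdot)$ is Lebesgue measure (in dimension $d$ or $d-1$); $d_\sigma=|\mathbf x_i-\mathbf x_j|$ for $\sigma=i|j$ and $d_\sigma=\mathrm{dist}(\mathbf x_i,\sigma)$ for exterior faces of $V_i$; $\tau_\sigma=\mathrm m(\sigma)/d_\sigma$. Grid functions are vectors $u=(u_1,\dots,u_N)\in\mathbb R^N$; for $\sigma=i|j$, $Du_{i,\sigma}=u_j-u_i$. For positive $u$ and $\sigma=i|j$, $\mathcal A_\sigma u=\frac{(\mathrm m(V_i)+\mathrm m(V_j))u_iu_j}{\mathrm m(V_i)u_j+\mathrm m(V_j)u_i}$ (harmonic average). The discrete inner product is $(f,g)=\sum_{i=1}^N\mathrm m(V_i)f_ig_i$; exponentials, logarithms, products and quotients of grid functions are taken componentwise.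 Scheme II (modified Crank–Nicolson in the variables $\eta^l=\log c^l$, $\xi=\log T$). Parameters: $\varepsilon>0$, $k>0$, $C_T>0$, $\Delta t>0$, $\nu^l>0$, $z^l\in\mathbb R$, a grid function $\rho^f$, Dirichlet data $\psi^D_\sigma$ on $\Gamma_D$-faces, Neumann data $g_\sigma$ on $\Gamma_N$-faces. Define $e^{f^{n+1/2}}:=e^{(f^n+f^{n+1})/2}$ for $f=\xi,\eta^l$, $\psi^{n+1/2}=\frac12(\psi^n+\psi^{n+1})$, and \[Q^{l}=\eta^{l,n+1}-\frac{e^{\eta^{l,n+1}}-e^{\eta^{l,n}}}{2e^{\eta^{l,n+1}}}-\frac{(e^{\eta^{l,n+1}}-e^{\eta^{l,n}})^2}{6e^{2\eta^{l,n+1}}},\qquad R^{n+1/2}=e^{-\xi^{n+1}}+\frac{e^{\xi^{n+1}}-e^{\xi^n}}{2e^{2\xi^{n+1}}}+\frac{(e^{\xi^{n+1}}-e^{\xi^n})^2}{3e^{3\xi^{n+1}}}.\] For $\sigma=i|j$ define the face flux \[G^l_{i,\sigma}=-\frac1{\nu^ld_\sigma}\Big[\mathcal A_\sigma\big(e^{\eta^{l,n+1/2}+\xi^{n+1/2}}\big)DQ^l_{i,\sigma}+\mathcal A_\sigma\big(e^{\eta^{l,n+1/2}}\big)D\big(z^l\psi^{n+1/2}+e^{\xi^{n+1/2}}\big)_{i,\sigma}\Big],\] with zero flux through exterior faces. The scheme reads, for $i=1,\dots,N$, $l=1,\dots,M$: (a) $\frac{e^{\eta^{l,n+1}_i}-e^{\eta^{l,n}_i}}{\Delta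 t}+\frac{\varepsilon}{\mathrm m(V_i)}\sum_{\sigma\in\mathcal E_{i,int}}\mathrm m(\sigma)G^l_{i,\sigma}=0$; (b) $-\frac{\varepsilon^2}{\mathrm m(V_i)}\Big[\sum_{\sigma\in\mathcal E_{i,int}}\tau_\sigma D\psi^{n+1}_{i,\sigma}+\sum_{\sigma\in\mathcal E^D_{i,ext}}\tau_\sigma(\psi^D_\sigma-\psi^{n+1}_i)\Big]-\frac1{\mathrm m(V_i)}\sum_{\sigma\in\mathcal E^N_{i,ext}}\mathrm m(\sigma)g_\sigma=\sum_lz^le^{\eta^{l,n+1}_i}+\rho^f_i$; (c) $C_T\frac{e^{\xi^{n+1}_i}-e^{\xi^n_i}}{\Delta t}=-\frac{k}{\mathrm m(V_i)}\sum_{\sigma\in\mathcal E_{i,int}}\tau_\sigma\mathcal A_\sigma(e^{\xi^{n+1/2}})D(\log R^{n+1/2})_{i,\sigma}+\frac{P_i}{R^{n+1/2}_i}+\varepsilon\sum_l\nu^le^{\eta^{l,n+1/2}_i}|\check{\mathbf u}^{l,n+1/2}_i|^2$ (thermally insulated: no exterior-face terms), where \[P_i=\sum_{l=1}^M\Big[\frac{\varepsilon}{\mathrm m(V_i)}\sum_{\sigma\in\mathcal E_{i,int}}\mathrm m(\sigma)G^l_{i,\sigma}Q^l_\sigma+(1+Q^l_i)\frac{e^{\eta^{l,n+1}_i}-e^{\eta^{l,n}_i}}{\Delta t}\Big],\] $Q^l_\sigma$ is a face value of $Q^l$ depending only on $\sigma$, and $\check{\mathbf u}^{l,n+1/2}_i\in\mathbb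 R^d$ are given cell-wise velocity reconstructions; $|\check{\mathbf u}^{l,n+1/2}|^2$ is the grid function $i\mapsto|\check{\mathbf u}^{l,n+1/2}_i|^2$. In the last sum of the claim $\sigma=i|j$ with either orientation (the product is orientation-independent). *)

(* Defs.v *)
From HB Require Import structures.
From mathcomp Require Import all_boot all_order all_algebra.
From mathcomp Require Import reals sequences exp.
Set Implicit Arguments. Unset Strict Implicit. Unset Printing Implicit Defensive.
Import Order.TTheory GRing.Theory Num.Theory.
Local Open Scope ring_scope.

(* Interior faces sigma = i|j are elements of [face]; fc1/fc2 are its two
   (distinct) adjacent cells.  Exterior faces on Gamma_D (resp. Gamma_N)
   are elements of [dface] (resp. [nface]), each belonging to one cell. *)
Record mesh (R : realType) (N : nat) := Mesh {
  face : finType;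
  fc1 : face -> 'I_N;
  fc2 : face -> 'I_N;
  fc_neq : forall s, fc1 s != fc2 s;
  vol : 'I_N -> R;
  vol_pos : forall i, 0 < vol i;
  fmeas : face -> R;
  fmeas_pos : forall s, 0 < fmeas s;
  fdist : face -> R;               (* d_sigma = |x_i - x_j| *)
  fdist_pos : forall s, 0 < fdist s;
  dface : finType;
  downer : dface -> 'I_N;
  dmeas : dface -> R;
  dmeas_pos : forall e, 0 < dmeas e;
  ddist : dface -> R;              (* dist(x_i, sigma) *)
  ddist_pos : forall e, 0 < ddist e;
  nface : finType;
  nowner : nface -> 'I_N;
  nmeas : nface -> R;
  nmeas_pos : forall e, 0 < nmeas e
}.

Section MeshOps.
Variables (R : realType) (N : nat) (Th : mesh R N).

Definition tau (s : face Th) : R := fmeas s / fdist s.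
Definition dtau (e : dface Th) : R := dmeas e / ddist e.

Definition incident (i : 'I_N) (s : face Th) : bool :=
  (fc1 s == i) || (fc2 s == i).
Definition other (s : face Th) (i : 'I_N) : 'I_N :=
  if fc1 s == i then fc2 s else fc1 s.
Definition Dg (u : 'I_N -> R) (i : 'I_N) (s : face Th) : R :=
  u (other s i) - u i.
Definition harm (u : 'I_N -> R) (s : face Th) : R :=
  let i := fc1 s in let j := fc2 s in
  (vol Th i + vol Th j) * u i * u j / (vol Th i * u j + vol Th j * u i).
Definition ip (f g : 'I_N -> R) : R := \sum_i vol Th i * f i * g i.
End MeshOps.

Definition sqnorm (R : realType) (d : nat) (v : 'rV[R]_d) : R :=
  \sum_(k < d) v 0 k ^+ 2.

Section Scheme.
Variables (R : realType) (N M d : nat) (Th : mesh R N).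
Variables (eps kk CT dt : R) (nu z : 'I_M -> R) (rhof : 'I_N -> R).
Variables (psiD : dface Th -> R) (gN : nface Th -> R).
Variable (Qf : 'I_M -> face Th -> R).
Variable (u : 'I_M -> 'I_N -> 'rV[R]_d).
Variables (eta0 eta1 : 'I_M -> 'I_N -> R) (psi0 psi1 xi0 xi1 : 'I_N -> R).

Definition mid (f g : 'I_N -> R) (i : 'I_N) : R := (f i + g i) / 2.

Definition Qs (l : 'I_M) (i : 'I_N) : R :=
  let a := expR (eta1 l i) in let b := expR (eta0 l i) in
  eta1 l i - (a - b) / (2 * a) - (a - b) ^+ 2 / (6 * a ^+ 2).

Definition Rs (i : 'I_N) : R :=
  let a := expR (xi1 i) in let b := expR (xi0 i) in
  expR (- xi1 i) + (a - b) / (2 * a ^+ 2) + (a - b) ^+ 2 / (3 * a ^+ 3).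

Definition Gflux (l : 'I_M) (i : 'I_N) (s : face Th) : R :=
  - (1 / (nu l * fdist s)) *
    (harm (fun j => expR (mid (eta0 l) (eta1 l) j + mid xi0 xi1 j)) s
       * Dg (Qs l) i s
     + harm (fun j => expR (mid (eta0 l) (eta1 l) j)) s
       * Dg (fun j => z l * mid psi0 psi1 j + expR (mid xi0 xi1 j)) i s).

Definition Ps (i : 'I_N) : R :=
  \sum_(l < M)
    (eps / vol Th i * (\sum_(s : face Th | incident i s) fmeas s * Gflux l i s * Qf l s)
     + (1 + Qs l i) * (expR (eta1 l i) - expR (eta0 l i)) / dt).

Definition scheme_a : Prop :=
  forall (l : 'I_M) (i : 'I_N),
    (expR (eta1 l i) - expR (eta0 l i)) / dt
    + eps / vol Th i * (\sum_(s : face Th | incident i s) fmeas s * Gflux l i s) = 0.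

Definition scheme_b : Prop :=
  forall i : 'I_N,
    - (eps ^+ 2 / vol Th i) *
        ((\sum_(s : face Th | incident i s) tau s * Dg psi1 i s)
         + \sum_(e : dface Th | downer e == i) dtau e * (psiD e - psi1 i))
    - 1 / vol Th i * (\sum_(e : nface Th | nowner e == i) nmeas e * gN e)
    = \sum_(l < M) z l * expR (eta1 l i) + rhof i.

Definition scheme_c : Prop :=
  forall i : 'I_N,
    CT * (expR (xi1 i) - expR (xi0 i)) / dt =
    - (kk / vol Th i) *
        (\sum_(s : face Th | incident i s)
           tau s * harm (fun j => expR (mid xi0 xi1 j)) s
                 * Dg (fun j => ln (Rs j)) i s)
    + Ps i / Rs i
    + eps * \sum_(l < M)
        nu l * expR (mid (eta0 l) (eta1 l) i) * sqnorm (u l i).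

Definition schemeII : Prop := [/\ scheme_a, scheme_b & scheme_c].

Definition entropy (eta : 'I_M -> 'I_N -> R) (xi : 'I_N -> R) : R :=
  - (\sum_(l < M) ip Th (fun i => expR (eta l i)) (fun i => ln (expR (eta l i))))
  + ip Th (fun i => ln (expR (xi i)) + 1) (fun _ => CT).

End Scheme.

(* Main.v *)
Require Import Defs.
From HB Require Import structures.
From mathcomp Require Import all_boot all_order all_algebra.
From mathcomp Require Import boolp classical_sets reals topology normedtype sequences derive exp.
From mathcomp Require Import ring lra.
Import Order.TTheory GRing.Theory Num.Theory.
Import numFieldNormedType.Exports.
Local Open Scope classical_set_scope.
Local Open Scope ring_scope.
Section S.
Variable R : realType.

Lemma mvt0 (f df : R -> R) (t : R) : (forall x : R, is_derive x (1:R) f (df x)) ->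
  exists c, ((0 <= c <= t) \/ (t <= c <= 0)) /\ f t - f 0 = df c * t.
Proof.
move=> hd.
have cf : forall a b : R, {within `[a, b], continuous f}.
  by move=> a b; apply: derivable_within_continuous => x _.
case: (lerP 0 t) => ht.
  have [c cin ->] := MVT_segment ht (fun x _ => hd x) (cf 0 t).
  exists c; split; last by rewrite subr0.
  by left; move: cin; rewrite in_itv /=.
have [c cin e] := MVT_segment (ltW ht) (fun x _ => hd x) (cf t 0).
exists c; split; first by right; move: cin; rewrite in_itv /=.
by rewrite -opprB e; ring.
Qed.

Lemma expR_ge1 {c : R} : 0 <= c -> 1 <= expR c.
Proof. by move=> h; rewrite -expR0 ler_expR. Qed.
Lemma expR_le1' {c : R} : c <= 0 -> expR c <= 1.
Proof. by move=> h; rewrite -expR0 ler_expR. Qed.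

Definition chi (t : R) := - t - (1 - expR t) - (1 - expR t) ^+ 2 / 2 - (1 - expR t) ^+ 3 / 3.

Lemma chi_ge0 t : 0 <= chi t.
Proof.
have hd : forall x : R, is_derive x (1:R) chi (- (1 - expR x) ^+ 3).
  move=> x; rewrite /chi; apply: is_derive_eq.
  by rewrite /GRing.scale /=; field.
have [c [hc e]] := mvt0 _ _ t hd.
have -> : chi t = - (1 - expR c) ^+ 3 * t.
  by rewrite -e /chi expR0; ring.
case: hc => /andP[h1 h2].
  have := expR_ge1 h1; rewrite -subr_le0 => h.
  have ht : 0 <= t := le_trans h1 h2.
  by rewrite mulr_ge0 // oppr_ge0 exprS mulr_le0_ge0 // exprn_even_ge0 .
have := expR_le1' h2; rewrite -subr_ge0 => h.
have ht : t <= 0 := le_trans h1 h2.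
by rewrite mulr_le0 // oppr_le0 exprn_ge0.
Qed.

Definition psi (t : R) := - t - (1 - expR t) - (1 - expR t) ^+ 2 / 2.
Definition phi (t : R) := - t * expR t - 1 + expR t + (1 - expR t) ^+ 2 / 2 + (1 - expR t) ^+ 3 / 6.

Lemma phi_le0 t : phi t <= 0.
Proof.
have hd : forall x : R, is_derive x (1:R) phi (expR x * psi x).
  move=> x; rewrite /phi /psi; apply: is_derive_eq.
  by rewrite /GRing.scale /=; field.
have hd' : forall x : R, is_derive x (1:R) psi (- (1 - expR x) ^+ 2).
  move=> x; rewrite /psi; apply: is_derive_eq.
  by rewrite /GRing.scale /=; field.
have [c [hc e]] := mvt0 _ _ t hd.
have [c' [hc' e']] := mvt0 _ _ c hd'.
have p00 : phi 0 = 0 by rewrite /phi expR0; ring.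
have s00 : psi 0 = 0 by rewrite /psi expR0; ring.
have -> : phi t = - (expR c * (1 - expR c') ^+ 2) * (c * t).
  rewrite -[phi t]subr0 -p00 e.
  have -> : psi c = - (1 - expR c') ^+ 2 * c by rewrite -e' s00 subr0.
  ring.
rewrite mulNr oppr_le0; apply: mulr_ge0; first by rewrite mulr_ge0 ?expR_ge0 ?sqr_ge0.
case: hc => /andP[h1 h2]; [apply: mulr_ge0 | apply: mulr_le0] => //.
  exact: le_trans h1 h2.
exact: le_trans h1 h2.
Qed.

Lemma c_ineq (x0 x1 : R) :
  expR x1 * x1 - expR x0 * x0 <=
  (1 + (x1 - (expR x1 - expR x0) / (2 * expR x1)
          - (expR x1 - expR x0) ^+ 2 / (6 * expR x1 ^+ 2))) * (expR x1 - expR x0).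
Proof.
have eb : expR x0 = expR x1 * expR (x0 - x1) by rewrite -expRD; congr expR; ring.
have x0e : x0 = x1 + (x0 - x1) by ring.
rewrite eb {2}x0e; move: (x0 - x1) => t.
have a0 : expR x1 != 0 by rewrite gt_eqF // expR_gt0.
rewrite -subr_ge0.
have -> : (1 + (x1 - (expR x1 - expR x1 * expR t) / (2 * expR x1) -
      (expR x1 - expR x1 * expR t) ^+ 2 / (6 * expR x1 ^+ 2))) *
   (expR x1 - expR x1 * expR t) - (expR x1 * x1 - expR x1 * expR t * (x1 + t))
   = expR x1 * (- phi t) by rewrite /phi; field.
by rewrite mulr_ge0 ?expR_ge0 // oppr_ge0 phi_le0.
Qed.

Lemma T_ineq (x0 x1 : R) :
  (expR x1 - expR x0) * (expR (- x1) + (expR x1 - expR x0) / (2 * expR x1 ^+ 2)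
     + (expR x1 - expR x0) ^+ 2 / (3 * expR x1 ^+ 3)) <= x1 - x0.
Proof.
have eb : expR x0 = expR x1 * expR (x0 - x1) by rewrite -expRD; congr expR; ring.
have x0e : x1 - x0 = - (x0 - x1) by ring.
rewrite eb x0e expRN; move: (x0 - x1) => t.
have a0 : expR x1 != 0 by rewrite gt_eqF // expR_gt0.
rewrite -subr_ge0.
have -> : - t - (expR x1 - expR x1 * expR t) *
   ((expR x1)^-1 + (expR x1 - expR x1 * expR t) / (2 * expR x1 ^+ 2) +
    (expR x1 - expR x1 * expR t) ^+ 2 / (3 * expR x1 ^+ 3)) = chi t
  by rewrite /chi; field.
exact: chi_ge0.
Qed.

Lemma R_pos (x0 x1 : R) :
  0 < expR (- x1) + (expR x1 - expR x0) / (2 * expR x1 ^+ 2)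
     + (expR x1 - expR x0) ^+ 2 / (3 * expR x1 ^+ 3).
Proof.
have a0 : expR x1 != 0 by rewrite gt_eqF // expR_gt0.
set y := 1 - expR x0 / expR x1.
have -> : expR (- x1) + (expR x1 - expR x0) / (2 * expR x1 ^+ 2)
     + (expR x1 - expR x0) ^+ 2 / (3 * expR x1 ^+ 3) =
     (expR x1)^-1 * (1 + y / 2 + y ^+ 2 / 3) by rewrite /y expRN; field.
apply: mulr_gt0; first by rewrite invr_gt0 expR_gt0.
have := sqr_ge0 (y + 3/4); nra.
Qed.

Lemma lnprod (x y : R) : 0 < x -> 0 < y -> 0 <= (ln x - ln y) * (x - y).
Proof.
move=> hx hy; case: (lerP x y) => h.
  have : ln x <= ln y by rewrite ler_ln.
  by rewrite -subr_le0 => h1; rewrite mulr_le0 // subr_le0.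
have : ln y <= ln x by rewrite ler_ln // ltW.
by rewrite -subr_ge0 => h1; rewrite mulr_ge0 // subr_ge0 ltW.
Qed.

End S.

Section Mesh.
Variables (R : realType) (N : nat) (Th : mesh R N).

Lemma other1 (s : face Th) : other s (fc1 s) = fc2 s.
Proof. by rewrite /other eqxx. Qed.
Lemma other2 (s : face Th) : other s (fc2 s) = fc1 s.
Proof. by rewrite /other (negbTE (fc_neq s)). Qed.
Lemma Dg2 (u : 'I_N -> R) (s : face Th) : Dg u (fc2 s) s = - Dg u (fc1 s) s.
Proof. by rewrite /Dg other1 other2 opprB. Qed.

Lemma dcount (F : 'I_N -> face Th -> R) :
  \sum_i \sum_(s : face Th | incident i s) F i s = \sum_(s : face Th) (F (fc1 s) s + F (fc2 s) s).
Proof.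
under eq_bigr do rewrite big_mkcond.
rewrite exchange_big; apply: eq_bigr => s _ /=.
transitivity (\sum_i ((if fc1 s == i then F i s else 0) + (if fc2 s == i then F i s else 0))).
  apply: eq_bigr => i _; rewrite /incident.
  case: eqP => [<-|_]; last by rewrite add0r.
  by rewrite eq_sym (negbTE (fc_neq s)) addr0.
rewrite big_split /= -!big_mkcond.
by rewrite (big_pred1 (fc1 s)) ?(big_pred1 (fc2 s)) // => i; rewrite /= eq_sym.
Qed.

Lemma harm_pos (v : 'I_N -> R) (s : face Th) : (forall j, 0 < v j) -> 0 < harm v s.
Proof.
move=> hv; rewrite /harm; apply: divr_gt0.
  by rewrite !mulr_gt0 // addr_gt0 // vol_pos.
by rewrite addr_gt0 // mulr_gt0 // vol_pos.
Qed.

Lemma tau_pos (s : face Th) : 0 < tau s.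
Proof. by rewrite /tau divr_gt0 // ?fmeas_pos ?fdist_pos. Qed.

Lemma entropyE (M : nat) CT (eta : 'I_M -> 'I_N -> R) (xi : 'I_N -> R) :
  entropy Th CT eta xi =
  \sum_i vol Th i * (CT * (xi i + 1) - \sum_(l < M) expR (eta l i) * eta l i).
Proof.
rewrite /entropy /ip exchange_big /= -sumrN -big_split /=; apply: eq_bigr => i _.
rewrite expRK mulrBr mulr_sumr.
under eq_bigr do rewrite expRK.
rewrite addrC; congr (_ + _); first by ring.
by congr (- _); apply: eq_bigr => l _; rewrite mulrA.
Qed.
End Mesh.

Local Close Scope classical_set_scope.

Theorem theorem3p4 (R : realType) (N M d : nat) (Th : mesh R N)
  (eps kk CT dt : R) (nu z : 'I_M -> R) (rhof : 'I_N -> R)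
  (psiD : dface Th -> R) (gN : nface Th -> R)
  (Qf : 'I_M -> face Th -> R) (u : 'I_M -> 'I_N -> 'rV[R]_d)
  (eta0 eta1 : 'I_M -> 'I_N -> R) (psi0 psi1 xi0 xi1 : 'I_N -> R) :
  0 < eps -> 0 < kk -> 0 < CT -> 0 < dt -> (forall l, 0 < nu l) ->
  schemeII eps kk CT dt nu z rhof psiD gN Qf u eta0 eta1 psi0 psi1 xi0 xi1 ->
  [/\ (* (1) mass conservation *)
      (forall l : 'I_M,
         ip Th (fun i => expR (eta1 l i)) (fun _ => 1)
         = ip Th (fun i => expR (eta0 l i)) (fun _ => 1)),
      (* (2) positivity *)
      (forall (l : 'I_M) (i : 'I_N), 0 < expR (eta1 l i) /\ 0 < expR (xi1 i)) &
      (* (3) discrete entropy increase *)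
      let Rh := Rs xi0 xi1 in
      let rhs :=
        eps * (\sum_(l < M)
                 ip Th (fun i => nu l * expR (mid (eta0 l) (eta1 l) i)
                                  * sqnorm (u l i)) Rh)
        + kk * \sum_(s : face Th)
                 tau s * harm (fun j => expR (mid xi0 xi1 j)) s
                   * Dg (fun j => ln (Rh j)) (fc1 s) s
                   * Dg Rh (fc1 s) s in
      (entropy Th CT eta1 xi1 - entropy Th CT eta0 xi0) / dt >= rhs
      /\ rhs >= 0].
Proof.
move=> eps0 kk0 CT0 dt0 nu0 [sa sb sc].
have dt0' : dt != 0 by rewrite gt_eqF.
have vol0 : forall i, vol Th i != 0 by move=> i; rewrite gt_eqF // vol_pos.
have Ganti : forall (l : 'I_M) (s : face Th), Gflux nu z eta0 eta1 psi0 psi1 xi0 xi1 l (fc2 s) s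
    = - Gflux nu z eta0 eta1 psi0 psi1 xi0 xi1 l (fc1 s) s.
  by move=> l s; rewrite /Gflux !Dg2; ring.
split.
- move=> l; apply/eqP; rewrite -subr_eq0; apply/eqP.
  rewrite /ip -sumrB.
  transitivity (\sum_i (- (dt * eps)) * (\sum_(s : face Th | incident i s)
       fmeas s * Gflux nu z eta0 eta1 psi0 psi1 xi0 xi1 l i s)).
    apply: eq_bigr => i _.
    have H := sa l i.
    have -> : vol Th i * expR (eta1 l i) * 1 - vol Th i * expR (eta0 l i) * 1 =
      (dt * vol Th i) * ((expR (eta1 l i) - expR (eta0 l i)) / dt + eps / vol Th i *
        (\sum_(s : face Th | incident i s) fmeas s * Gflux nu z eta0 eta1 psi0 psi1 xi0 xi1 l i s))
      - dt * eps * (\sum_(s : face Th | incident i s) fmeas s * Gflux nu z eta0 eta1 psi0 psi1 xi0 xi1 l i s).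
      by field; rewrite ?dt0' ?vol0.
    by rewrite H mulr0 sub0r mulNr.
  rewrite -mulr_sumr dcount big1 ?mulr0 // => s _; rewrite Ganti; ring.
- by move=> l i; split; apply: expR_gt0.
move=> Rh rhs; rewrite {}/rhs {}/Rh.
have Rp : forall i, 0 < Rs xi0 xi1 i by move=> i; exact: R_pos.
have R0 : forall i, Rs xi0 xi1 i != 0 by move=> i; rewrite gt_eqF.
split; last first.
  apply: addr_ge0; apply: mulr_ge0; try exact: ltW.
    apply: sumr_ge0 => l _; rewrite /ip; apply: sumr_ge0 => i _.
    have v := ltW (vol_pos Th i); have n := ltW (nu0 l).
    have e := expR_ge0 (mid (eta0 l) (eta1 l) i); have r := ltW (Rp i).
    have q : 0 <= sqnorm (u l i) by rewrite /sqnorm; apply: sumr_ge0 => k _; exact: sqr_ge0.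
    by rewrite !mulr_ge0.
  apply: sumr_ge0 => s _; rewrite -mulrA; apply: mulr_ge0.
    have t := ltW (@tau_pos _ _ Th s).
    have h : 0 <= harm (fun j : 'I_N => expR (mid xi0 xi1 j)) s.
      by apply: ltW; apply: harm_pos => j; exact: expR_gt0.
    by rewrite mulr_ge0.
  by rewrite /Dg other1; exact: lnprod.
rewrite !entropyE -sumrB mulr_suml.
apply: le_trans (_ : \sum_i vol Th i * (CT * (expR (xi1 i) - expR (xi0 i)) * Rs xi0 xi1 i
    - \sum_(l < M) (1 + Qs eta0 eta1 l i) * (expR (eta1 l i) - expR (eta0 l i))) / dt <= _); last first.
  apply: ler_sum => i _.
  rewrite ler_pM2r ?invr_gt0 // -mulrBr ler_pM2l ?vol_pos //.
  have -> : CT * (xi1 i + 1) - \sum_(l < M) expR (eta1 l i) * eta1 l i -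
     (CT * (xi0 i + 1) - \sum_(l < M) expR (eta0 l i) * eta0 l i) =
     CT * (xi1 i - xi0 i) - (\sum_(l < M) expR (eta1 l i) * eta1 l i - \sum_(l < M) expR (eta0 l i) * eta0 l i)
    by ring.
  apply: lerB.
    rewrite -mulrA ler_pM2l //; exact: (@T_ineq R (xi0 i) (xi1 i)).
  by rewrite -sumrB; apply: ler_sum => l _; exact: c_ineq.
rewrite le_eqVlt; apply/predU1P; left.
symmetry.
transitivity (\sum_i (- kk * (Rs xi0 xi1 i * (\sum_(s : face Th | incident i s) tau s * harm (fun j => expR (mid xi0 xi1 j)) s * Dg (fun j => ln (Rs xi0 xi1 j)) i s)) + eps * (\sum_(l < M) (\sum_(s : face Th | incident i s) fmeas s * Gflux nu z eta0 eta1 psi0 psi1 xi0 xi1 l i s * Qf l s)) + eps * (vol Th i * Rs xi0 xi1 i * (\sum_(l < M) nu l * expR (mid (eta0 l) (eta1 l) i) * sqnorm (u l i))))).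
  apply: eq_bigr => i _.
  have H := sc i.
  have HP : Ps eps dt nu z Qf eta0 eta1 psi0 psi1 xi0 xi1 i = eps / vol Th i * (\sum_(l < M) (\sum_(s : face Th | incident i s) fmeas s * Gflux nu z eta0 eta1 psi0 psi1 xi0 xi1 l i s * Qf l s)) + (\sum_(l < M) (1 + Qs eta0 eta1 l i) * (expR (eta1 l i) - expR (eta0 l i))) / dt.
    by rewrite /Ps big_split /= -mulr_sumr -mulr_suml.
  rewrite HP in H.
  have -> : vol Th i * (CT * (expR (xi1 i) - expR (xi0 i)) * Rs xi0 xi1 i - (\sum_(l < M) (1 + Qs eta0 eta1 l i) * (expR (eta1 l i) - expR (eta0 l i)))) / dt = vol Th i * Rs xi0 xi1 i * (CT * (expR (xi1 i) - expR (xi0 i)) / dt) - vol Th i * (\sum_(l < M) (1 + Qs eta0 eta1 l i) * (expR (eta1 l i) - expR (eta0 l i))) / dt.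
    by field.
  rewrite H.
  by field; rewrite dt0' R0 vol0.
rewrite !big_split /= -!mulr_sumr.
have T1 : \sum_i \sum_(l < M) (\sum_(s : face Th | incident i s) fmeas s * Gflux nu z eta0 eta1 psi0 psi1 xi0 xi1 l i s * Qf l s) = 0.
  rewrite exchange_big /=; apply: big1 => l _.
  rewrite dcount; apply: big1 => s _; rewrite Ganti; ring.
have T2 : \sum_i Rs xi0 xi1 i * (\sum_(s : face Th | incident i s) tau s * harm (fun j => expR (mid xi0 xi1 j)) s * Dg (fun j => ln (Rs xi0 xi1 j)) i s) = - \sum_(s : face Th) tau s * harm (fun j => expR (mid xi0 xi1 j)) s
        * Dg (fun j => ln (Rs xi0 xi1 j)) (fc1 s) s * Dg (Rs xi0 xi1) (fc1 s) s.
  under eq_bigr do rewrite mulr_sumr.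
  rewrite dcount -sumrN; apply: eq_bigr => s _.
  have D1 : Dg (Rs xi0 xi1) (fc1 s) s = Rs xi0 xi1 (fc2 s) - Rs xi0 xi1 (fc1 s) by rewrite /Dg other1.
  rewrite D1 Dg2; ring.
have T3 : \sum_i vol Th i * Rs xi0 xi1 i * (\sum_(l < M) nu l * expR (mid (eta0 l) (eta1 l) i) * sqnorm (u l i)) = \sum_(l < M) ip Th (fun i => nu l * expR (mid (eta0 l) (eta1 l) i) * sqnorm (u l i)) (Rs xi0 xi1).
  rewrite /ip exchange_big /=; apply: eq_bigr => i _; rewrite mulr_sumr; apply: eq_bigr => l _; ring.
rewrite T1 T2 T3; ring.
Qed.
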